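(* Consider the general load coupling model with JT described in the context. Let $\bm\kappa,\bm\kappa'\in\{0,1\}^{n\times m}$ be JT patterns such that, for some cell $i$ and UE $j$, $\kappa_{ij}=0$, $\kappa'_{ij}=1$, and $\kappa'_{hl}=\kappa_{hl}$ for all $(h,l)\neq(i,j)$. Let $\widetilde{\bm{x}}\in\mathbb{R}^n_{\ge0}$ satisfy $\widetilde{\bm{x}}=\bm{f}^{\bm\kappa}\big(\bm{h}^{\bm\kappa}(\widetilde{\bm{x}})\big)$ and $\bm{x}\in\mathbb{R}^n_{\ge0}$ satisfy $\bm{x}=\bm{f}^{\bm{\kappa'}}\big(\bm{h}^{\bm{\kappa'}}(\bm{x})\big)$. Define the sequence $\bm{x}^{(0)}=\widetilde{\bm{x}}$ and $\bm{x}^{(t)}=\bm{f}^{\bm\kappa}\big(\bm{h}^{\bm{\kappa'}}(\bm{x}^{(t-1)})\big)$ for $t\ge1$. If there exists $k\geq 1$ such that $f^{\bm{\kappa'}}_i\big(\bm{h}^{\bm{\kappa'}}(\bm{x}^{(k)})\big)\leq x^{(k)}_i$, then $\bm{x}\leq\widetilde{\bm{x}}$ componentwise.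
   Context: There are $n$ cells and $m$ UEs. Cell $i$ has transmit power per resource block $p_i>0$, $g_{ij}>0$ is the channel gain between cell $i$ and UE $j$, $d_j>0$ is the (normalized) bitrate demand of UE $j$, and $\sigma^2>0$ is the noise power. A JT pattern is a matrix $\bm\kappa\in\{0,1\}^{n\times m}$, where $\kappa_{ij}=1$ means cell $i$ serves UE $j$; every UE is assumed to be served by at least one cell. For a pattern $\bm\kappa$, the cell load function $\bm f^{\bm\kappa}=(f^{\bm\kappa}_1,\dots,f^{\bm\kappa}_n)$ and SINR function $\bm h^{\bm\kappa}=(h^{\bm\kappa}_1,\dots,h^{\bm\kappa}_m)$ are $f_i^{\bm{\kappa}}(\bm{\gamma})=\sum_{j=1}^{m}\frac{\kappa_{ij}d_j}{\log_2\left(1+\gamma_j\right)}$, $\quad h_j^{\bm{\kappa}}(\bm{x})=\frac{\sum_{i=1}^{n}p_ig_{ij}\kappa_{ij}}{\sum_{k=1}^{n}p_kg_{kj}x_{k}(1-\kappa_{kj})+\sigma^2}$, for $\bm\gamma\in\mathbb{R}^m_{>0}$ and $\bm x\in\mathbb{R}^n_{\ge0}$. A fixed point $\bm x=\bm f^{\bm\kappa}(\bm h^{\bm\kappa}(\bm x))$ is the network-wide cell load vector for pattern $\bm\kappa$. Vector inequalities are componentwise. *)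

(* Defs.v *)
From mathcomp Require Import all_boot all_order all_algebra.
From mathcomp Require Import Rstruct.
From Stdlib Require Import Reals.
Set Implicit Arguments. Unset Strict Implicit. Unset Printing Implicit Defensive.
Import Order.TTheory GRing.Theory Num.Theory.
Local Open Scope ring_scope.

Definition log2 (y : R) : R := (ln y / ln 2)%R.

(* A JT pattern: kappa i j = true iff cell i serves UE j. *)
Definition pattern (n m : nat) := 'I_n -> 'I_m -> bool.

Definition load_f n m (kappa : pattern n m) (d : 'I_m -> R)
  (gamma : 'I_m -> R) : 'I_n -> R :=
  fun i => \sum_(j < m) (if kappa i j then d j / log2 (1 + gamma j) else 0).

Definition sinr_h n m (kappa : pattern n m) (p : 'I_n -> R)
  (g : 'I_n -> 'I_m -> R) (sigma2 : R) (x : 'I_n -> R) : 'I_m -> R :=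
  fun j => (\sum_(i < n) (if kappa i j then p i * g i j else 0)) /
           (\sum_(k < n) (if kappa k j then 0 else p k * g k j * x k) + sigma2).

Fixpoint mixed_iter n m (kappa kappa' : pattern n m) (d : 'I_m -> R)
  (p : 'I_n -> R) (g : 'I_n -> 'I_m -> R) (sigma2 : R)
  (x0 : 'I_n -> R) (t : nat) : 'I_n -> R :=
  match t with
  | 0%N => x0
  | t'.+1 => load_f kappa d
               (sinr_h kappa' p g sigma2 (mixed_iter kappa kappa' d p g sigma2 x0 t'))
  end.

(* Main.v *)
Require Import Defs.
From mathcomp Require Import all_boot all_order all_algebra.
From mathcomp Require Import Rstruct.
From Stdlib Require Import Reals.
From mathcomp Require Import ring lra.
From mathcomp Require Import all_classical all_reals interval_inference convex exp Rstruct_topology.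
Import Order.TTheory GRing.Theory Num.Theory.
Local Open Scope ring_scope.

Lemma sum_gt0 n (F : 'I_n -> R) j1 : (forall j, 0 <= F j) -> 0 < F j1 -> 0 < \sum_j F j.
Proof.
move=> H0 H1; rewrite (bigD1 j1) //=.
have : 0 <= \sum_(j | j != j1) F j by apply: sumr_ge0 => j _.
lra.
Qed.

Lemma sum_lt n (F H : 'I_n -> R) j1 : (forall j, F j <= H j) -> F j1 < H j1 ->
  \sum_j F j < \sum_j H j.
Proof.
move=> H0 H1; rewrite (bigD1 j1) //= [X in _ < X](bigD1 j1) //=.
have : \sum_(j | j != j1) F j <= \sum_(j | j != j1) H j by apply: ler_sum => j _.
lra.
Qed.

Lemma ln2_gt0 : 0 < Rpower.ln 2.
Proof. rewrite RlnE; apply: exp.ln_gt0; apply/RltP; exact: (Rlt_plus_1 1). Qed.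

Lemma ln2_gt0' : 0 < exp.ln (2:R).
Proof. by rewrite -RlnE ln2_gt0. Qed.

Lemma log2E y : log2 y = exp.ln y / exp.ln 2.
Proof. by rewrite /log2 RdivE !RlnE. Qed.

Lemma log2_gt0 y : 1 < y -> 0 < log2 y.
Proof.
move=> y1; rewrite /log2 RdivE divr_gt0 ?ln2_gt0 //.
by rewrite RlnE exp.ln_gt0.
Qed.

Lemma log2_le y y' : 0 < y -> y <= y' -> log2 y <= log2 y'.
Proof.
move=> y0 yy; rewrite !log2E ler_pM2r ?invr_gt0 ?ln2_gt0' //.
by rewrite exp.ler_ln ?posrE // (lt_le_trans y0).
Qed.

Lemma log2_lt y y' : 0 < y -> y < y' -> log2 y < log2 y'.
Proof.
move=> y0 yy; rewrite !log2E ltr_pM2r ?invr_gt0 ?ln2_gt0' //.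
by rewrite exp.ltr_ln ?posrE // (lt_trans y0).
Qed.
Local Open Scope convex_scope.

Lemma ln_scale (u a v w : R) : 0 <= u -> 1 <= a -> v = 1 + u -> w = 1 + u / a ->
  Rpower.ln v <= a * Rpower.ln w.
Proof.
move=> u0 a1 -> ->.
have a0 : 0 < a by apply: lt_le_trans a1.
have ia0 : 0 <= a^-1 by rewrite invr_ge0 ltW.
have ia1 : a^-1 <= 1 by rewrite invf_le1.
have := @concave_ln _ (Itv01 ia0 ia1) (1 + u) 1 ltac:(by rewrite ltr_pwDl) ltr01.
rewrite !convRE /= !RlnE exp.ln1 mulr0 addr0.
have -> : a^-1 * (1 + u) + (1 - a^-1) * 1 = 1 + u / a.
  by rewrite [u / a]mulrC; ring.
move=> h.
move: h; rewrite -(ler_pM2l a0) mulrA mulfV ?gt_eqF // mul1r.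
by move=> h1; apply: h1.
Qed.
Local Close Scope convex_scope.

Lemma f_ge0 n m (kap : pattern n m) d gam i :
  (forall j, 0 < d j) -> (forall j, 0 < gam j) -> 0 <= load_f kap d gam i.
Proof.
move=> hd hg; apply: sumr_ge0 => j _; case: (kap i j) => //=.
by rewrite divr_ge0 ?ltW ?hd // log2_gt0 // ltrDl.
Qed.

Lemma f_anti n m (kap : pattern n m) d gam gam' i :
  (forall j, 0 < d j) -> (forall j, 0 < gam j) -> (forall j, gam j <= gam' j) ->
  load_f kap d gam' i <= load_f kap d gam i.
Proof.
move=> hd hg hgg; apply: ler_sum => j _; case: (kap i j) => //=.
have l1 : 0 < log2 (1 + gam j) by rewrite log2_gt0 // ltrDl.
have l2 : log2 (1 + gam j) <= log2 (1 + gam' j).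
  by apply: log2_le; [rewrite addr_gt0 | rewrite lerD2l].
apply: ler_wpM2l; first exact: ltW (hd j).
rewrite lef_pV2 ?posrE //.
exact: lt_le_trans l2.
Qed.

Lemma f_mono_pat n m (kap kap' : pattern n m) d gam i :
  (forall j, kap i j -> kap' i j) ->
  (forall j, 0 < d j) -> (forall j, 0 < gam j) ->
  load_f kap d gam i <= load_f kap' d gam i.
Proof.
move=> hkk hd hg; apply: ler_sum => j _.
case E: (kap i j); first by rewrite (hkk _ E).
case: (kap' i j) => //=.
by rewrite divr_ge0 ?ltW ?hd // log2_gt0 // ltrDl.
Qed.

Lemma f_eq_pat n m (kap kap' : pattern n m) d gam i :
  (forall j, kap' i j = kap i j) -> load_f kap' d gam i = load_f kap d gam i.
Proof. by move=> H; apply: eq_bigr => j _; rewrite H. Qed.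

Lemma pgz_ge0 (a b c : R) : 0 < a -> 0 < b -> 0 <= c -> 0 <= a * b * c.
Proof. by move=> ha hb hc; apply: mulr_ge0 => //; apply: mulr_ge0; apply: ltW. Qed.

Lemma pg_ge0 (a b : R) : 0 < a -> 0 < b -> 0 <= a * b.
Proof. by move=> ha hb; apply: mulr_ge0; apply: ltW. Qed.

Lemma den_gt0 n m (kap : pattern n m) (p : 'I_n -> R) g s (z : 'I_n -> R) j :
  (forall i, 0 < p i) -> (forall i j, 0 < g i j) -> 0 < s -> (forall i, 0 <= z i) ->
  0 < \sum_(k < n) (if kap k j then 0 else p k * g k j * z k) + s.
Proof.
move=> hp hg hs hz.
have : 0 <= \sum_(k < n) (if kap k j then 0 else p k * g k j * z k).
  apply: sumr_ge0 => k _; case: (kap k j) => //=.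
  exact: pgz_ge0.
lra.
Qed.

Lemma num_ge0 n m (kap : pattern n m) (p : 'I_n -> R) g j :
  (forall i, 0 < p i) -> (forall i j, 0 < g i j) ->
  0 <= \sum_(i < n) (if kap i j then p i * g i j else 0).
Proof.
move=> hp hg; apply: sumr_ge0 => k _; case: (kap k j) => //=.
exact: pg_ge0.
Qed.

Lemma num_gt0 n m (kap : pattern n m) (p : 'I_n -> R) g j :
  (exists i, kap i j) -> (forall i, 0 < p i) -> (forall i j, 0 < g i j) ->
  0 < \sum_(i < n) (if kap i j then p i * g i j else 0).
Proof.
move=> [i1 Hi1] hp hg; apply: (@sum_gt0 _ _ i1).
  by move=> k; case: (kap k j) => //=; exact: pg_ge0.
by rewrite Hi1 mulr_gt0.
Qed.

Lemma h_pos n m (kap : pattern n m) p g s z j :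
  (exists i, kap i j) -> (forall i, 0 < p i) -> (forall i j, 0 < g i j) -> 0 < s ->
  (forall i, 0 <= z i) -> 0 < sinr_h kap p g s z j.
Proof.
move=> hk hp hg hs hz; rewrite /sinr_h divr_gt0 ?num_gt0 //.
exact: den_gt0.
Qed.

Lemma h_anti n m (kap : pattern n m) p g s z z' j :
  (forall i, 0 < p i) -> (forall i j, 0 < g i j) -> 0 < s ->
  (forall i, 0 <= z i) -> (forall i, z i <= z' i) ->
  sinr_h kap p g s z' j <= sinr_h kap p g s z j.
Proof.
move=> hp hg hs hz hzz.
have hz' : forall i, 0 <= z' i by move=> i; apply: le_trans (hz i) (hzz i).
rewrite /sinr_h ler_wpM2l ?num_ge0 // lef_pV2 ?posrE ?den_gt0 //.
rewrite lerD2r; apply: ler_sum => k _; case: (kap k j) => //=.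
by apply: ler_wpM2l; [apply: pg_ge0 | apply: hzz].
Qed.

Lemma h_mono_pat n m (kap kap' : pattern n m) p g s z j :
  (forall i j, kap i j -> kap' i j) ->
  (forall i, 0 < p i) -> (forall i j, 0 < g i j) -> 0 < s ->
  (forall i, 0 <= z i) ->
  sinr_h kap p g s z j <= sinr_h kap' p g s z j.
Proof.
move=> hkk hp hg hs hz.
rewrite /sinr_h; apply: ler_pM.
- exact: num_ge0.
- by rewrite invr_ge0; apply: ltW; apply: den_gt0.
  apply: ler_sum => k _; case E: (kap k j); first by rewrite (hkk _ _ E).
  by case: (kap' k j) => //=; exact: pg_ge0.
- rewrite lef_pV2 ?posrE ?den_gt0 // lerD2r; apply: ler_sum => k _.
case E: (kap k j); first by rewrite (hkk _ _ E).
by case: (kap' k j) => //=; exact: pgz_ge0.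
Qed.

Lemma term_scale n m (kap : pattern n m) p g s (d : 'I_m -> R) z (al : R) j :
  (forall i, 0 < p i) -> (forall i j, 0 < g i j) -> 0 < s -> 0 < d j ->
  (exists i, kap i j) -> (forall i, 0 <= z i) -> 1 < al ->
  d j / log2 (1 + sinr_h kap p g s (fun i => al * z i) j)
  < al * (d j / log2 (1 + sinr_h kap p g s z j)).
Proof.
move=> hp hg hs hd hk hz hal.
have al0 : 0 < al by apply: lt_trans hal.
rewrite /sinr_h.
set N := \sum_(i < n) (if kap i j then p i * g i j else 0).
set I := \sum_(k < n) (if kap k j then 0 else p k * g k j * z k).
have hN : 0 < N by apply: num_gt0.
have hI0 : 0 <= I.
  apply: sumr_ge0 => k _; case: (kap k j) => //=; exact: pgz_ge0.
have -> : \sum_(k < n) (if kap k j then 0 else p k * g k j * (al * z k)) = al * I.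
  rewrite /I mulr_sumr; apply: eq_bigr => k _.
  by case: (kap k j) => /=; [rewrite mulr0 | ring].
set u := N / (I + s).
have hu : 0 < u by rewrite /u divr_gt0 // ltr_wpDl.
set v := N / (al * I + s).
have uv : u / al < v.
  rewrite /u /v -mulrA -invfM ltr_pM2l // ltf_pV2 ?posrE; last 2 first.
  - by rewrite mulr_gt0 // ltr_wpDl.
  - by rewrite ltr_wpDl // mulr_ge0 // ltW.
  nra.
have Lu : 0 < log2 (1 + u) by rewrite log2_gt0 // ltrDl.
have L1 : log2 (1 + u) <= al * log2 (1 + u / al).
  rewrite !log2E -!RlnE mulrA ler_pM2r ?invr_gt0 ?ln2_gt0 //.
  by apply: (@ln_scale u al) => //; apply: ltW.
have L2 : log2 (1 + u / al) < log2 (1 + v).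
  apply: log2_lt; last by rewrite ltrD2l.
  by rewrite addr_gt0 // divr_gt0.
have hv : 0 < v by rewrite /v divr_gt0 // ltr_wpDl // mulr_ge0 // ltW.
have Lv : 0 < log2 (1 + v) by rewrite log2_gt0 // ltrDl.
have key : log2 (1 + u) < al * log2 (1 + v) by nra.
rewrite mulrCA ltr_pM2l // ltr_pdivlMr //.
rewrite ltr_pdivrMl // mulrC.
exact: key.
Qed.

Lemma G_pos_row n m (kap : pattern n m) p g s (d : 'I_m -> R) z i j1 :
  (forall i, 0 < p i) -> (forall i j, 0 < g i j) -> 0 < s -> (forall j, 0 < d j) ->
  (forall j, exists i, kap i j) -> (forall i, 0 <= z i) -> kap i j1 ->
  0 < load_f kap d (sinr_h kap p g s z) i.
Proof.
move=> hp hg hs hd hk hz hij.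
apply: (@sum_gt0 _ _ j1).
  move=> j; case: (kap i j) => //=.
  rewrite divr_ge0 ?ltW ?hd //.
  by rewrite log2_gt0 // ltrDl h_pos.
rewrite hij divr_gt0 ?hd // log2_gt0 // ltrDl h_pos //.
Qed.

Lemma claimA n m (kap : pattern n m) p g s (d : 'I_m -> R) (x y : 'I_n -> R) :
  (forall i, 0 < p i) -> (forall i j, 0 < g i j) -> 0 < s -> (forall j, 0 < d j) ->
  (forall j, exists i, kap i j) ->
  (forall i, 0 <= x i) -> (forall i, 0 <= y i) ->
  (forall i, x i = load_f kap d (sinr_h kap p g s x) i) ->
  (forall i, load_f kap d (sinr_h kap p g s y) i <= y i) ->
  forall i, x i <= y i.
Proof.
move=> hp hg hs hd hk hx0 hy0 hx hy.
have zero : forall k, y k = 0 -> x k = 0.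
  move=> k yk0; case: (boolP [exists j, kap k j]).
    move/existsP=> [j Hj].
    have := @G_pos_row _ _ kap p g s d y k j hp hg hs hd hk hy0 Hj.
    by have := hy k; rewrite yk0 => h1 h2; exfalso; lra.
  rewrite negb_exists => /forallP H.
  rewrite hx /load_f big1 // => j _; by rewrite (negbTE (H j)).
move=> i; rewrite leNgt; apply/negP => Hi.
have yi0 : 0 < y i.
  rewrite lt_neqAle hy0 andbT; apply/negP => /eqP yi; move: Hi.
  by rewrite -yi (zero i (esym yi)) ltxx.
have [b _ Hb] := @arg_maxP _ _ 'I_n i predT (fun k => x k / y k) erefl.
set al := x b / y b in Hb.
have ri : 1 < x i / y i by rewrite ltr_pdivlMr // mul1r.
have hal : 1 < al by apply: lt_le_trans ri (Hb i erefl).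
have yb0 : 0 < y b.
  rewrite lt_neqAle hy0 andbT; apply/negP => /eqP yb; move: hal.
  by rewrite /al -yb invr0 mulr0 ltr10.
have xb : x b = al * y b.
  by rewrite /al divfK // gt_eqF.
have hxal : forall k, x k <= al * y k.
  move=> k; have [yk|yk] := eqVneq (y k) 0.
    by rewrite yk mulr0 (zero k yk).
  have yk0 : 0 < y k by rewrite lt_neqAle eq_sym yk hy0.
  by rewrite -ler_pdivrMr //; exact: (Hb k erefl).
have haly0 : forall k, 0 <= al * y k by move=> k; rewrite mulr_ge0 // ltW // (lt_trans ltr01).
have [j1 Hj1] : exists j, kap b j.
  case: (boolP [exists j, kap b j]); first by move/existsP.
  rewrite negb_exists => /forallP H.
  have : x b = 0 by rewrite hx /load_f big1 // => j _; rewrite (negbTE (H j)).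
  by rewrite xb => /eqP; rewrite mulf_eq0 !gt_eqF // (lt_trans ltr01).
have s1 : x b <= load_f kap d (sinr_h kap p g s (fun k => al * y k)) b.
  rewrite {1}hx; apply: f_anti => //.
    move=> j; exact: h_pos.
  move=> j; exact: h_anti.
have s2 : load_f kap d (sinr_h kap p g s (fun k => al * y k)) b
          < al * load_f kap d (sinr_h kap p g s y) b.
  rewrite /load_f mulr_sumr; apply: (@sum_lt _ _ _ j1).
    move=> j; case: (kap b j) => /=; last by rewrite mulr0.
    by apply: ltW; apply: term_scale.
  by rewrite Hj1; apply: term_scale.
have s3 : al * load_f kap d (sinr_h kap p g s y) b <= al * y b.
  by rewrite ler_pM2l ?(lt_trans ltr01).
by move: s1 s2 s3; rewrite -xb; lra.
Qed.

Theorem theorem3 (n m : nat) (p : 'I_n -> R) (g : 'I_n -> 'I_m -> R)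
  (d : 'I_m -> R) (sigma2 : R)
  (hp : forall i, 0 < p i) (hg : forall i j, 0 < g i j)
  (hd : forall j, 0 < d j) (hs : 0 < sigma2)
  (kappa kappa' : pattern n m)
  (hk : forall j, exists i, kappa i j) (hk' : forall j, exists i, kappa' i j)
  (i0 : 'I_n) (j0 : 'I_m)
  (h0 : kappa i0 j0 = false) (h1 : kappa' i0 j0 = true)
  (hsame : forall h l, (h, l) <> (i0, j0) -> kappa' h l = kappa h l)
  (xt x : 'I_n -> R)
  (hxt0 : forall i, 0 <= xt i) (hx0 : forall i, 0 <= x i)
  (hxt : forall i, xt i = load_f kappa d (sinr_h kappa p g sigma2 xt) i)
  (hx : forall i, x i = load_f kappa' d (sinr_h kappa' p g sigma2 x) i)
  (hexk : exists k : nat, (1 <= k)%nat /\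
     load_f kappa' d (sinr_h kappa' p g sigma2
        (mixed_iter kappa kappa' d p g sigma2 xt k)) i0
     <= mixed_iter kappa kappa' d p g sigma2 xt k i0) :
  forall i, x i <= xt i.
Proof.
have hkk : forall h l, kappa h l -> kappa' h l.
  move=> h l; case: (eqVneq (h, l) (i0, j0)) => [[-> ->]|ne].
    by rewrite h0.
  by rewrite hsame //; apply/eqP.
set Y := mixed_iter kappa kappa' d p g sigma2 xt.
have YS : forall t, Y t.+1 = load_f kappa d (sinr_h kappa' p g sigma2 (Y t)) by [].
have S : forall t, (forall i, 0 <= Y t i) /\ (forall i, Y t.+1 i <= Y t i).
  elim=> [|t [IH1 IH2]].
    split; first exact: hxt0.
    move=> i; rewrite YS [X in _ <= X]hxt; apply: f_anti => //.
      by move=> j; apply: h_pos.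
    by move=> j; apply: h_mono_pat.
  have Y1 : forall i, 0 <= Y t.+1 i.
    by move=> i; rewrite YS; apply: f_ge0 => // j; apply: h_pos.
  split => // i.
  rewrite [Y t.+2]YS [Y t.+1 in X in _ <= X]YS; apply: f_anti => //.
    by move=> j; apply: h_pos.
  by move=> j; apply: h_anti.
have Yxt : forall t i, Y t i <= xt i.
  elim=> [|t IH] i //.
  exact: le_trans (proj2 (S t) i) (IH i).
case: hexk => k [_ Hk].
have HG : forall i, load_f kappa' d (sinr_h kappa' p g sigma2 (Y k)) i <= Y k i.
  move=> i; case: (eqVneq i i0) => [->|ne]; first exact: Hk.
  rewrite (@f_eq_pat _ _ kappa kappa'); first by rewrite -YS; exact: (proj2 (S k) i).
  move=> j; apply: hsame => -[ei _]; move: ne; rewrite ei eqxx //.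
move=> i; apply: le_trans (Yxt k i).
apply: (@claimA _ _ kappa' p g sigma2 d) => //.
exact: (proj1 (S k)).
Qed.
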